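(* Let $G_1=(V_1,E_1)$ and $G_2=(V_2,E_2)$ be finite simple graphs with $G_1$ a minor of $G_2$, obtained from $G_2$ by deleting the edge set $E_2^d$ and contracting the edge set $E_2^c$ as described in the context. Let $A$ be an incidence matrix on $\mathcal D(G_2)$ such that $A_{d_1,d_2}=0$ whenever $d_1$ or $d_2$ is a dart $(v,e)$ with $e\in E_2^d$. Let $K$ be the set of darts $(v,e)\in V_{\mathcal D}(G_2)$ with $e\in E_2^c\cup E_2^d$ and $\bar K=V_{\mathcal D}(G_2)\setminus K$. Then $\bar K$ can be identified with $V_{\mathcal D}(G_1)$ (via $(x,e)\mapsto$ (image of $x$, image of $e$)), and the antisymmetric matrix $A^{\bar K}$ indexed by $\bar K$ with entries $(A^{\bar K})_{i,j}=-(A^{\bar K})_{j,i}=\operatorname{Pf}(A_{K\cup\{i,j\}})$ for $i<j$ in $\bar K$ is an incidence matrix on $\mathcal D(G_1)$.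
   Context: The dart graph $\mathcal D(G)$ of $G=(V,E)$ has vertex set $V_{\mathcal D}(G)=\{(v,e)\in V\times E: v\text{ incident with }e\}$, two distinct darts $(v,e),(v',e')$ being adjacent iff $v=v'$ or $e=e'$. Fix a total order on $V_{\mathcal D}(G_2)$; subsets of indices carry the induced order. An incidence matrix on $\mathcal D(G)$ is an antisymmetric complex matrix indexed by $V_{\mathcal D}(G)$ with $A_{d,d'}=0$ whenever $\{d,d'\}$ is not an edge of $\mathcal D(G)$. For a set of indices $L$, $A_L=(A_{i,j})_{i,j\in L}$ is the principal submatrix, and $\operatorname{Pf}$ is the Pfaffian. Minor transformation: $E_2^d,E_2^c\subseteq E_2$ are disjoint, $(V_2,E_2^c)$ contains no cycle, each connected component of $(V_2,E_2^c)$ is contracted to a single vertex of $G_1$ (a surjection $V_2\to V_1$), and the edges of $E_2\setminus(E_2^c\cup E_2^d)$ correspond bijectively to $E_1$, an edge $\{x,y\}$ corresponding to the edge of $G_1$ joining the images of $x$ and $y$. *)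

(* Defs.v *)
From HB Require Import structures.
From mathcomp Require Import all_boot all_order fingroup perm all_algebra.
From mathcomp Require Import complex.
Set Implicit Arguments. Unset Strict Implicit. Unset Printing Implicit Defensive.
Import GRing.Theory.
Local Open Scope ring_scope.

Definition simple_graph (V : finType) (E : {set {set V}}) : Prop :=
  forall e, e \in E -> #|e| = 2%N.

Definition adjE (V : finType) (E : {set {set V}}) : rel V :=
  fun x y => [set x; y] \in E.

Definition acyclic (V : finType) (E : {set {set V}}) : Prop :=
  ~ exists s : seq V, [/\ (3 <= size s)%N, uniq s & path.cycle (adjE E) s].

Definition darts (V : finType) (E : {set {set V}}) : {set V * {set V}} :=
  [set d | (d.2 \in E) && (d.1 \in d.2)].

Definition dart_adj (V : finType) (d d' : V * {set V}) : bool :=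
  (d != d') && ((d.1 == d'.1) || (d.2 == d'.2)).

Definition incidence_matrix (C : pzRingType) (V : finType) (E : {set {set V}})
    (A : V * {set V} -> V * {set V} -> C) : Prop :=
  (forall d d', d \in darts E -> d' \in darts E -> A d d' = - A d' d) /\
  (forall d d', d \in darts E -> d' \in darts E -> ~~ dart_adj d d' -> A d d' = 0).

Definition vimg (V1 V2 : finType) (pi : V2 -> V1) (e : {set V2}) : {set V1} :=
  [set pi x | x in e].

(* G1 = (V1,E1) is obtained from G2 = (V2,E2) by deleting E2d and
   contracting E2c, with pi : V2 -> V1 the contraction map. *)
Definition minor_transf (V1 V2 : finType) (E1 : {set {set V1}})
    (E2 : {set {set V2}}) (E2d E2c : {set {set V2}}) (pi : V2 -> V1) : Prop :=
  [/\ E2d \subset E2, E2c \subset E2, [disjoint E2d & E2c] & acyclic E2c] /\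
  (forall y : V1, exists x : V2, pi x = y) /\
  (forall x y : V2, (pi x == pi y) = connect (adjE E2c) x y) /\
  {in E2 :\: (E2c :|: E2d) &, injective (vimg pi)} /\
  [set vimg pi e | e in E2 :\: (E2c :|: E2d)] = E1.

Definition total_order (T : Type) (le : rel T) : Prop :=
  [/\ total le, transitive le & antisymmetric le].

(* Pfaffian of a k x k matrix:
   Pf(M) = 1/(2^m m!) sum_{s in S_k} sgn(s) prod_{i<m} M_{s(2i), s(2i+1)}
   for k = 2m, and 0 for k odd.  Here the product runs over the even
   indices i = 2j (0-based), and ordS i = i + 1 (< k since k is even). *)
Definition pf (F : fieldType) (k : nat) (M : 'M[F]_k) : F :=
  if odd k then 0 else
  ((2 ^ k./2 * (k./2)`!)%N%:R)^-1 *
  \sum_(s : 'S_k) (-1) ^+ s *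
     \prod_(i < k | ~~ odd i) M (s i) (s (ordS i)).

Definition pf_sub (F : fieldType) (T : finType) (le : rel T)
    (A : T -> T -> F) (L : {set T}) : F :=
  let s := in_tuple (sort le (enum L)) in
  pf (\matrix_(i, j) A (tnth s i) (tnth s j)).

Definition schur_pf (F : fieldType) (T : finType) (le : rel T)
    (A : T -> T -> F) (K : {set T}) (i j : T) : F :=
  if (i != j) && le i j then pf_sub le A (K :|: [set i; j])
  else if (i != j) && le j i then - pf_sub le A (K :|: [set i; j])
  else 0.

Definition dart_map (V1 V2 : finType) (pi : V2 -> V1) (d : V2 * {set V2}) :
  V1 * {set V1} := (pi d.1, vimg pi d.2).

(* Main.v *)
Require Import Defs.
From HB Require Import structures.
From mathcomp Require Import all_boot all_order fingroup perm all_algebra.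
From mathcomp Require Import complex.
Import GRing.Theory.
Local Open Scope ring_scope.

Lemma invol_even (T : finType) (f : T -> T) (X : {set T}) :
  (forall x, x \in X -> [/\ f x \in X, f (f x) = x & f x != x]) -> ~~ odd #|X|.
Proof.
have [n] := ubnP #|X|; elim: n X => // n IH X leX hX.
case: (set_0Vmem X) => [->|[x xX]]; first by rewrite cards0.
have [fxX ffx fxx] := hX x xX.
set Y := X :\: [set x; f x].
have cY : #|X| = (#|Y|.+2)%N.
  rewrite -(cardsID [set x; f x] X) (setIidPr _) ?cards2 1?eq_sym ?fxx //.
  by apply/subsetP => y; rewrite !inE => /orP[]/eqP->.
rewrite cY /= negbK; apply: IH; first by move: leX; rewrite cY ltnS => /ltnW.
move=> y; rewrite !inE => /andP[/norP[yx yfx] yX].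
have [fyX ffy fyy] := hX y yX.
split => //; rewrite fyX andbT; apply/norP; split.
  by apply: contra yfx => /eqP <-; rewrite ffy.
by apply: contra yx => /eqP fyfx; rewrite -ffy fyfx ffx.
Qed.

Definition oth (V : finType) (f : {set V}) (v : V) := odflt v [pick w in f :\ v].
Arguments oth {V}.

Lemma oth_spec (V : finType) (a b : V) : a != b -> oth [set a; b] a = b.
Proof.
move=> ab; rewrite /oth setU1K ?in_set1 //.
by case: pickP => [w|/(_ b)]; rewrite !inE ?eqxx // => /eqP->.
Qed.

Lemma oth2 (V : finType) (f : {set V}) v : #|f| = 2%N -> v \in f ->
  [/\ oth f v \in f, oth f v != v, oth f (oth f v) = v & f = [set v; oth f v]].
Proof.
move/eqP/cards2P=> [a [b [ab ->]]]; rewrite !inE => /orP[]/eqP->.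
  by rewrite !oth_spec // ?inE ?eqxx ?orbT // eq_sym setUC oth_spec // eq_sym.
rewrite setUC !oth_spec // ?inE ?eqxx ?orbT // 1?eq_sym //.
by rewrite eq_sym ab [[set b; a]]setUC oth_spec.
Qed.

Lemma pf_sub_zero (F : fieldType) (T : finType) (le : rel T)
  (A : T -> T -> F) (L P : {set T}) :
  P \subset L -> odd #|P| ->
  (forall a b, a \in L -> b \in L -> a \in P -> b \notin P -> A a b = 0 /\ A b a = 0) ->
  pf_sub le A L = 0.
Proof.
move=> PL oP hz; rewrite /pf_sub /pf.
set s := in_tuple _.
set k := size _.
case: ifP => // ek.
rewrite big1 ?mulr0 // => σ _.
have us : uniq s by rewrite sort_uniq enum_uniq.
have ms : forall y, (y \in s) = (y \in L) by move=> y; rewrite mem_sort mem_enum.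
set Q := [set i : 'I_k | tnth s (σ i) \in P].
have cQ : #|Q| = #|P|.
  have eP : P = [set tnth s (σ i) | i in Q].
    apply/setP=> y; apply/idP/imsetP.
      move=> yP; have : y \in s by rewrite ms (subsetP PL).
      case/tnthP=> j yj; rewrite yj in yP *; exists (σ^-1 j)%g; rewrite ?inE permKV //.
    by case=> i; rewrite inE => iQ ->.
  rewrite [in RHS]eP card_imset // => i j /(tuple_uniqP _ us).
  exact: perm_inj.
have hg : forall j : 'I_k, ~~ odd j -> val (ordS j) = j.+1.
  move=> j ej; rewrite /= modn_small //.
  have := ltn_ord j; rewrite leq_eqVlt => /orP[/eqP hj|//].
  have : odd j.+1 = odd k by rewrite hj.
  by rewrite /= ej ek.
have hp : forall i : 'I_k, odd i -> ~~ odd (ord_pred i) /\ ordS (ord_pred i) = i.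
  move=> i oi; split; last exact: ord_predK.
  have := congr1 val (ord_predK i) => /=.
  have := ltn_ord (ord_pred i); rewrite leq_eqVlt => /orP[/eqP ->|lt].
    by rewrite modnn => i0; move: oi; rewrite -i0.
  by rewrite modn_small // => ei; move: oi; rewrite -{1}ei /=; exact: id.
case: (boolP [forall i : 'I_k, ~~ odd i ==> ((i \in Q) == (ordS i \in Q))]) => [/forallP hall|].
  exfalso.
  have : ~~ odd #|Q|.
    apply: (@invol_even _ (fun i : 'I_k => if odd i then ord_pred i else ordS i)) => i iQ.
    case: ifP => oi.
      have [ep ep2] := hp i oi.
      rewrite ifN // ep2; split => //.
        by have := hall (ord_pred i); rewrite ep ep2 iQ /= => /eqP ->.
      by apply/negP => /eqP e; move: ep; rewrite e oi.
    have ej : ~~ odd i by rewrite oi.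
    have oS : odd (ordS i) by rewrite hg //= ej.
    rewrite oS ordSK; split => //.
      by have := hall i; rewrite ej iQ /= => /eqP <-.
    by apply/negP => /eqP e; move: oS; rewrite e oi.
  by rewrite cQ oP.
rewrite negb_forall; case/existsP => i; rewrite negb_imply => /andP [ei ne].
apply/eqP; rewrite mulf_eq0; apply/orP; right.
apply/prodf_eq0; exists i => //; rewrite mxE.
have m1 : tnth s (σ i) \in L by rewrite -ms mem_tnth.
have m2 : tnth s (σ (ordS i)) \in L by rewrite -ms mem_tnth.
move: ne; rewrite !inE.
case: (boolP (_ \in P)) => h1; case: (boolP (_ \in P)) => h2 //= _.
  by have [-> _] := hz _ _ m1 m2 h1 h2.
by have [_ ->] := hz _ _ m2 m1 h2 h1.
Qed.

Lemma dart_adj_sym (V : finType) (a b : V * {set V}) : dart_adj a b = dart_adj b a.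
Proof. by rewrite /dart_adj eq_sym (eq_sym a.1) (eq_sym a.2). Qed.

Theorem proposition2p13 (R : rcfType) (V1 V2 : finType)
  (E1 : {set {set V1}}) (E2 : {set {set V2}})
  (hG1 : simple_graph E1) (hG2 : simple_graph E2)
  (E2d E2c : {set {set V2}}) (pi : V2 -> V1)
  (hminor : minor_transf E1 E2 E2d E2c pi)
  (le : rel (V2 * {set V2})) (hle : total_order le)
  (A : V2 * {set V2} -> V2 * {set V2} -> R[i])
  (hA : incidence_matrix E2 A)
  (hAd : forall d1 d2, d1 \in darts E2 -> d2 \in darts E2 ->
           (d1.2 \in E2d) || (d2.2 \in E2d) -> A d1 d2 = 0) :
  let K := [set d in darts E2 | d.2 \in E2c :|: E2d] in
  let Kbar := darts E2 :\: K in
  let AK := schur_pf le A K in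
  ({in Kbar &, injective (dart_map pi)} /\ dart_map pi @: Kbar = darts E1) /\
  ((forall d d', d \in Kbar -> d' \in Kbar -> AK d d' = - AK d' d) /\
   (forall d d', d \in Kbar -> d' \in Kbar ->
      ~~ dart_adj (dart_map pi d) (dart_map pi d') -> AK d d' = 0)).
Proof.
move=> K Kbar AK.
case: hminor => [[hdsub hcsub hdisj _] [_ [hconn [hinj hE1]]]].
case: hA => hAanti hA0.
have inKbar : forall x e, ((x, e) \in Kbar) = (e \in E2 :\: (E2c :|: E2d)) && (x \in e).
  move=> x e; rewrite !inE /=.
  by case: (e \in E2); case: (x \in e); case: (e \in E2c); case: (e \in E2d).
have inK : forall x e, ((x, e) \in K) = [&& e \in E2, x \in e & e \in E2c :|: E2d].
  by move=> x e; rewrite !inE /= andbA.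
have e1 : forall e, e \in E2 :\: (E2c :|: E2d) -> vimg pi e \in E1.
  by move=> e he; rewrite -hE1; apply: imset_f.
have pair : forall (e : {set V2}) x y, #|e| = 2%N -> x \in e -> y \in e -> x != y ->
    e = [set x; y].
  move=> e x y ce xe ye xy; apply/eqP; rewrite eq_sym eqEcard cards2 xy ce andbT.
  by apply/subsetP => z; rewrite !inE => /orP[]/eqP->.
have vimg2 : forall x y, vimg pi [set x; y] = [set pi x; pi y].
  by move=> x y; rewrite /vimg imsetU1 imset_set1.
have hinjK : {in Kbar &, injective (dart_map pi)}.
  move=> [x e] [y f]; rewrite !inKbar => /andP[eE xe] /andP[fE yf] [pxy vef].
  have ef : e = f by apply: hinj.
  subst f; case: (eqVneq x y) => [->//|xy]; exfalso.
  have eE2 : e \in E2 by move: eE; rewrite inE => /andP[].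
  have := e1 e eE; rewrite (pair e x y (hG2 _ eE2) xe yf xy) vimg2 pxy setUid.
  by move/hG1; rewrite cards1.
split; [split => //|split].
- apply/setP => [[y f]]; apply/imsetP/idP.
    case=> [[x e]]; rewrite inKbar => /andP[eE xe] [-> ->].
    by rewrite inE /= e1 //=; apply: imset_f.
  rewrite inE /= => /andP[]; rewrite -hE1 => /imsetP[e eE ->] /imsetP[x xe ->].
  by exists (x, e) => //; rewrite inKbar eE xe.
- move=> d d' _ _; rewrite /AK /schur_pf [[set d'; d]]setUC.
  case: (eqVneq d d') => [->|ne] /=; first by rewrite ?eqxx /= ?oppr0.
  have ne' : d' != d by rewrite eq_sym.
  have [htot _ hant] : [/\ total le, transitive le & antisymmetric le] := hle.
  case: (boolP (le d d')) => l1; case: (boolP (le d' d)) => l2 //=.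
  + by have := hant d d'; rewrite l1 l2 => /(_ isT) edd; rewrite edd eqxx in ne.
  + by rewrite opprK.
  + by move: (htot d d'); rewrite (negbTE l1) (negbTE l2).
- move=> [x e] [x' e'] dK d'K nadj.
  case: (eqVneq (x, e) (x', e')) => [<-|ne]; first by rewrite /AK /schur_pf eqxx.
  rewrite /dart_adj (inj_in_eq hinjK dK d'K) ne /= negb_or in nadj.
  case/andP: nadj => pxx' vee.
  have ee : e != e' by apply: contraNneq vee => ->.
  have dnK : (x, e) \notin K by move: dK; rewrite inE => /andP[].
  have dD : (x, e) \in darts E2 by move: dK; rewrite inE => /andP[].
  have d'D : (x', e') \in darts E2 by move: d'K; rewrite inE => /andP[].
  have [enc edn] : e \notin E2c /\ e \notin E2d.
    by move: dK; rewrite inKbar !inE => /andP[/andP[/norP[-> ->] _] _].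
  set L := K :|: [set (x, e); (x', e')].
  set P := [set k in L | (k.2 \notin E2d) && (pi k.1 == pi x)].
  set Q := [set k in K | (k.2 \notin E2d) && (pi k.1 == pi x)].
  have darL : forall k, k \in L -> k \in darts E2.
    move=> k; rewrite /L in_setU in_set2 => /orP[kK|/orP[/eqP->|/eqP->]] //.
    by move: kK; rewrite !inE => /andP[].
  have pz : pf_sub le A L = 0.
    apply: (@pf_sub_zero _ _ le A L P).
    + by apply/subsetP => k; rewrite inE => /andP[].
    + have eP : P = (x, e) |: Q.
        apply/setP => k; rewrite /P /Q /L !inE.
        case: (eqVneq k (x, e)) => [->|n1] /=; first by rewrite orbT edn eqxx.
        case: (eqVneq k (x', e')) => [->|n2] /=; last by rewrite orbF.
        by rewrite eq_sym (negbTE pxx') !andbF.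
      have dQ : (x, e) \notin Q by rewrite inE (negbTE dnK).
      rewrite eP cardsU1 dQ add1n /=.
      apply: (@invol_even _ (fun k => (oth k.2 k.1, k.2))).
      move=> [v f]; rewrite !inE /= => /andP[vK /andP[fd pv]].
      case/andP: vK => /andP[fE vf] fcd.
      have fc : f \in E2c by move: fcd; rewrite (negbTE fd) orbF.
      have [wf wv ww fe] := @oth2 _ f v (hG2 f fE) vf.
      have pvw : pi v = pi (oth f v).
        by apply/eqP; rewrite hconn; apply: connect1; rewrite /adjE -fe.
      split.
      * by rewrite fE wf fcd fd -pvw pv.
      * by rewrite /= ww.
      * by apply/negP => /eqP [] /eqP; rewrite (negbTE wv).
    + move=> a b aL bL aP bP.
      have aD := darL a aL; have bD := darL b bL.
      case: (boolP (b.2 \in E2d)) => bd.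
        by split; apply: hAd => //; rewrite bd ?orbT.
      have pb : pi b.1 != pi x by move: bP; rewrite /P inE bL bd /=.
      have pa : pi a.1 = pi x by move: aP; rewrite /P inE => /andP[_ /andP[_ /eqP]].
      have ad : a.2 \notin E2d by move: aP; rewrite /P inE => /andP[_ /andP[]].
      have nab : ~~ dart_adj a b.
        rewrite /dart_adj negb_and negb_or; apply/orP; right; apply/andP; split.
          by apply: contra pb => /eqP <-; rewrite pa.
        apply/negP => /eqP ab2.
        move: a b aL bL aP bP aD bD pa pb ad bd ab2 => [u g] [w h] aL bL aP bP aD bD pa pb ad bd /= ab2.
        subst h.
        move: aL; rewrite /L !inE => /orP[uK|/orP[/eqP [eu eg]|/eqP [eu eg]]].
        - case/andP: uK => /andP[gE ug] gcd.
          have gc : g \in E2c by move: gcd; rewrite (negbTE ad) orbF.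
          move: bD; rewrite inE => /andP[_ wg] /=.
          have uw : u != w by apply: contra pb => /eqP <-; rewrite /= pa.
          have := pair g u w (hG2 g gE) ug wg uw => ge.
          have : pi u = pi w by apply/eqP; rewrite hconn; apply: connect1; rewrite /adjE -ge.
          by move=> puw; move: pb; rewrite /= -puw pa eqxx.
        - subst u g; move: bL; rewrite /L !inE => /orP[wK|/orP[/eqP [wx]|/eqP [_ ee']]].
          + by move: wK; rewrite (negbTE enc) (negbTE edn) /= andbF.
          + by move: pb; rewrite /= wx eqxx.
          + by rewrite ee' eqxx in ee.
        - by move: pxx'; rewrite -eu pa eqxx.
      split; first by apply: hA0.
      by apply: hA0 => //; rewrite dart_adj_sym.
  have pz' : pf_sub le A (K :|: [set (x, e); (x', e')]) = 0 := pz.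
  by rewrite /AK /schur_pf pz' oppr0; do !case: ifP.
Qed.
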